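(* Let $X=(X_1,\ldots,X_n)$ be a random vector with finitely many values, $Y$ a random variable with finitely many values (each with positive probability), and $L$ any partition lattice of $[n]$ with Möbius function $\mathfrak{m}$. If $X_1,\ldots,X_n$ are jointly independent given $Y$, then $$\ell_{1\cdots n}=\sum_{\pi\in L}\mathfrak{m}(\pi,[n])\prod_{B\in\pi}\mathbb{E}\Big[\prod_{i\in B}\mu_i^Y\Big],$$ i.e. $\ell_{1\cdots n}$ equals the $L$-cumulant of the random vector $(\mu_1^Y,\ldots,\mu_n^Y)$.
   Context: A partition lattice of $[n]$ is a subset of the set of set partitions of $[n]$ containing $[n]$ and $1|2|\cdots|n$ which is a lattice under refinement. $\mu_B=\mathbb{E}[\prod_{i\in B}X_i]$; $\ell_{1\cdots n}=\sum_{\pi\in L}\mathfrak{m}(\pi,[n])\prod_{B\in\pi}\mu_B$. $\mu_i^Y$ is the random variable $y\mapsto\mathbb{E}[X_i\mid Y=y]$. *)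

(* Defs.v *)
From HB Require Import structures.
From mathcomp Require Import all_boot all_order all_algebra.
Set Implicit Arguments. Unset Strict Implicit. Unset Printing Implicit Defensive.
Import Order.TTheory GRing.Theory Num.Theory.
Local Open Scope ring_scope.

Definition refines (n : nat) (P Q : {set {set 'I_n}}) : bool :=
  [forall B in P, [exists C in Q, B \subset C]].

Definition top_part (n : nat) : {set {set 'I_n}} := [set [set: 'I_n]].
Definition bot_part (n : nat) : {set {set 'I_n}} := [set [set i] | i : 'I_n].

Definition is_lub (n : nat) (L : {set {set {set 'I_n}}}) (P Q J : {set {set 'I_n}}) :=
  [/\ refines P J, refines Q J &
      forall K, K \in L -> refines P K -> refines Q K -> refines J K].

Definition is_glb (n : nat) (L : {set {set {set 'I_n}}}) (P Q M : {set {set 'I_n}}) :=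
  [/\ refines M P, refines M Q &
      forall K, K \in L -> refines K P -> refines K Q -> refines K M].

Definition is_partition_lattice (n : nat) (L : {set {set {set 'I_n}}}) : Prop :=
  [/\ forall P, P \in L -> partition P [set: 'I_n],
      top_part n \in L,
      bot_part n \in L,
      forall P Q, P \in L -> Q \in L -> exists2 J, J \in L & is_lub L P Q J &
      forall P Q, P \in L -> Q \in L -> exists2 M, M \in L & is_glb L P Q M].

(* Moebius function of the poset (L, refines), by the usual recursion
   m(P,P) = 1, m(P,Q) = - sum_{P <= T < Q} m(P,T) for P < Q, 0 otherwise.
   The recursion depth is bounded by #|L|, used as fuel. *)
Fixpoint mobius_fuel (R : nzRingType) (n : nat) (L : {set {set {set 'I_n}}})
    (k : nat) (P Q : {set {set 'I_n}}) : R :=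
  if P == Q then 1 else
  match k with
  | 0 => 0
  | k'.+1 =>
      if refines P Q then
        - \sum_(T in L | [&& refines P T, T != Q & refines T Q])
            mobius_fuel R L k' P T
      else 0
  end.

Definition mobius (R : nzRingType) (n : nat) (L : {set {set {set 'I_n}}})
    (P Q : {set {set 'I_n}}) : R :=
  mobius_fuel R L #|L| P Q.

Definition Ex (Omega : finType) (R : nzRingType) (p : Omega -> R) (Z : Omega -> R) : R :=
  \sum_w p w * Z w.

Definition PrY (Omega : finType) (R : nzRingType) (T : eqType) (p : Omega -> R)
    (Y : Omega -> T) (y : T) : R :=
  \sum_(w | Y w == y) p w.

Definition condE (Omega : finType) (R : fieldType) (T : eqType) (p : Omega -> R)
    (Y : Omega -> T) (Z : Omega -> R) (y : T) : R :=
  (\sum_(w | Y w == y) p w * Z w) / PrY p Y y.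

Definition condPr (Omega : finType) (R : fieldType) (T : eqType) (p : Omega -> R)
    (Y : Omega -> T) (A : pred Omega) (y : T) : R :=
  condE p Y (fun w => (A w)%:R) y.

Definition cond_indep (Omega : finType) (R : numFieldType) (T : eqType) (n : nat)
    (p : Omega -> R) (X : 'I_n -> Omega -> R) (Y : Omega -> T) : Prop :=
  forall y : T, 0 < PrY p Y y -> forall x : 'I_n -> R,
    condPr p Y (fun w => [forall i, X i w == x i]) y
    = \prod_(i < n) condPr p Y (fun w => X i w == x i) y.

Definition moment (Omega : finType) (R : nzRingType) (n : nat) (p : Omega -> R)
    (X : 'I_n -> Omega -> R) (B : {set 'I_n}) : R :=
  Ex p (fun w => \prod_(i in B) X i w).

Definition L_cumulant (Omega : finType) (R : nzRingType) (n : nat)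
    (L : {set {set {set 'I_n}}}) (p : Omega -> R) (X : 'I_n -> Omega -> R) : R :=
  \sum_(P in L) mobius R L P (top_part n) * \prod_(B in P) moment p X B.

(* Main.v *)
Require Import Defs.
From HB Require Import structures.
From mathcomp Require Import all_boot all_order all_algebra.
Import Order.TTheory GRing.Theory Num.Theory.
Local Open Scope ring_scope.

Lemma sum_q (R : fieldType) (Omega : finType) (T : eqType) (p : Omega -> R)
  (Y : Omega -> T) y : PrY p Y y != 0 ->
  \sum_w p w * (Y w == y)%:R / PrY p Y y = 1.
Proof.
move=> H; rewrite -mulr_suml.
have -> : \sum_w p w * (Y w == y)%:R = PrY p Y y.
  rewrite /PrY [RHS]big_mkcond /=; apply: eq_bigr => w _.
  by case: (Y w == y); rewrite ?mulr1 ?mulr0.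
by rewrite divff.
Qed.

Lemma tower (R : fieldType) (Omega : finType) (T : eqType) (p : Omega -> R)
  (Y : Omega -> T) (Z : Omega -> R) :
  (forall w, PrY p Y (Y w) != 0) ->
  \sum_w p w * Z w = \sum_w p w * condE p Y Z (Y w).
Proof.
move=> H.
transitivity (\sum_w \sum_v (Y v == Y w)%:R * (p v / PrY p Y (Y v)) * (p w * Z w)).
  apply: eq_bigr => w _.
  rewrite -mulr_suml.
  have -> : \sum_v (Y v == Y w)%:R * (p v / PrY p Y (Y v)) = 1.
    rewrite -[RHS](@sum_q _ _ _ p Y (Y w) (H w)); apply: eq_bigr => v _.
    by case: eqP => [->|_]; rewrite ?(mul1r, mul0r, mulr1, mulr0, mulr1n).
  by rewrite ?mul1r.
rewrite exchange_big /=; apply: eq_bigr => v _.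
rewrite /condE [in RHS]big_mkcond /= mulr_suml mulr_sumr; apply: eq_bigr => w _.
rewrite eq_sym; case: eqP => [e|_]; rewrite ?e ?(mul1r, mul0r, mulr1, mulr0) //.
by rewrite mulrAC -!mulrA.
Qed.

Lemma factor (R : fieldType) (Omega : finType) n (q : Omega -> R)
  (X : 'I_n -> Omega -> R) (B : {set 'I_n}) :
  \sum_w q w = 1 ->
  (forall x : 'I_n -> R, \sum_w q w * ([forall i, X i w == x i])%:R
       = \prod_i \sum_w q w * (X i w == x i)%:R) ->
  \sum_w q w * \prod_(i in B) X i w = \prod_(i in B) \sum_w q w * X i w.
Proof.
move=> q1 H.
pose S := undup (codom (fun iw : 'I_n * Omega => X iw.1 iw.2)).
have uS : uniq S := undup_uniq _.
have inS i w : X i w \in S.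
  by rewrite mem_undup; exact: (codom_f (fun iw : 'I_n * Omega => X iw.1 iw.2) (i, w)).
pose m := size S.
have lt i w : (index (X i w) S < m)%N by rewrite index_mem.
pose fw w : {ffun 'I_n -> 'I_m} := [ffun i => Ordinal (lt i w)].
pose v (k : 'I_m) := nth 0 S k.
have key i w k : (X i w == v k) = (fw w i == k).
  rewrite ffunE -val_eqE /=; apply/eqP/eqP => [->|].
  - by apply: index_uniq.
  - by move=> e; rewrite /v /= -e nth_index.
have keyf w (f : {ffun 'I_n -> 'I_m}) : [forall i, X i w == v (f i)] = (fw w == f).
  apply/forallP/eqP => [Hf|<- i]; last by rewrite key.
  by apply/ffunP => i; apply/eqP; rewrite -key; exact: Hf.
have sumk (c : 'I_m -> R) i w : \sum_k (X i w == v k)%:R * c k = c (fw w i).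
  rewrite (bigD1 (fw w i)) //= big1 ?addr0.
    by rewrite key eqxx mul1r.
  by move=> k /negbTE nk; rewrite key eq_sym nk mul0r.
pose g i k := \sum_w q w * (X i w == v k)%:R.
transitivity (\sum_(f : {ffun 'I_n -> 'I_m})
     \prod_i ((if i \in B then v (f i) else 1) * g i (f i))).
  rewrite (partition_big fw xpredT) //=; apply: eq_bigr => f _.
  rewrite big_split /= -big_mkcond /=.
  transitivity (\sum_(w | fw w == f) q w * \prod_(i in B) v (f i)).
    apply: eq_bigr => w /eqP <-; congr (_ * _); apply: eq_bigr => i _.
    by apply/eqP; rewrite key.
  rewrite -mulr_suml mulrC; congr (_ * _).
  rewrite /g -(H (fun i => v (f i))) [LHS]big_mkcond /=; apply: eq_bigr => w _.
  by rewrite keyf; case: (fw w == f); rewrite ?mulr1 ?mulr0.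
rewrite -(bigA_distr_bigA (fun i k => (if i \in B then v k else 1) * g i k)) /= [RHS]big_mkcond /=; apply: eq_bigr => i _.
have E (c : 'I_m -> R) : \sum_k c k * g i k = \sum_w q w * c (fw w i).
  rewrite /g; under eq_bigr do rewrite mulr_sumr.
  rewrite exchange_big /=; apply: eq_bigr => w _.
  rewrite -sumk mulr_sumr; apply: eq_bigr => k _.
  by rewrite mulrCA [c k * _]mulrC.
case: (i \in B); rewrite E.
  by apply: eq_bigr => w _; congr (_ * _); apply/eqP; rewrite eq_sym key.
by under eq_bigr => w _ do rewrite mulr1.
Qed.

Lemma condE_sum (R : fieldType) (Omega : finType) (T : eqType) (p : Omega -> R)
  (Y : Omega -> T) (Z : Omega -> R) y :
 condE p Y Z y = \sum_w (p w * (Y w == y)%:R / PrY p Y y) * Z w.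
Proof.
rewrite /condE big_mkcond /= mulr_suml; apply: eq_bigr => w _.
case: (Y w == y); rewrite ?mulr1 ?mulr0 ?mul0r //.
by rewrite mulrAC.
Qed.

Theorem proposition5p9 (R : realFieldType) (n : nat) (L : {set {set {set 'I_n}}})
    (Omega : finType) (T : eqType) (p : Omega -> R)
    (X : 'I_n -> Omega -> R) (Y : Omega -> T) :
  (forall w, 0 <= p w) ->
  \sum_w p w = 1 ->
  (forall w, 0 < PrY p Y (Y w)) ->
  is_partition_lattice L ->
  cond_indep p X Y ->
  L_cumulant L p X =
  \sum_(P in L) mobius R L P (top_part n) *
     \prod_(B in P) Ex p (fun w => \prod_(i in B) condE p Y (X i) (Y w)).
Proof.
move=> _ _ hpos _ hind.
have nz w : PrY p Y (Y w) != 0 by rewrite gt_eqF ?hpos.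
rewrite /L_cumulant; apply: eq_bigr => P _; congr (_ * _); apply: eq_bigr => B _.
rewrite /moment /Ex (@tower _ _ _ p Y _ nz); apply: eq_bigr => w _; congr (_ * _).
rewrite condE_sum.
under [RHS]eq_bigr => i _ do rewrite condE_sum.
apply: factor; first exact: sum_q.
move=> x; move: (hind (Y w) (hpos w) x); rewrite /condPr condE_sum => ->.
by apply: eq_bigr => i _; rewrite condE_sum.
Qed.
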